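(* Consider an axially symmetric magnetized star and its surroundings in a steady state, described in an inertial frame with spherical polar coordinates $(r,\theta,\phi)$ (rotation axis $\theta=0$) by ideal magnetohydrodynamics, and consisting of a magnetic rotator flow region and a disk region separated by a shock boundary $\Sigma_{shock}$. Let $Q$ be any point on $\Sigma_{shock}$. Suppose that there is no meridional motion in the disk region, i.e. the disk velocity is $\hat{\mathbf{v}}=\hat v_\phi\,\mathbf e_\phi$, and that the normal component $\hat B_{n,Q}$ of the magnetic field in the disk region at $Q$ is not zero. Let $\hat Q$ be the point of the disk region adjacent to $Q$ on the magnetic field line through $Q$. Then the angular velocity of the disk region at $\hat Q$ (that is, $\hat v_\phi/(r\sin\theta)$ there) is equal to the angular velocity $\omega$ at the point $P_\star$ of the stellar photosphere at which the magnetic field line through $Q$ is anchored. Furthermore, if the system is equatorially symmetric and the magnetic field line through $Q$ is continuous across the disk, then the angular velocity at all points of the disk region along this field line is the same as that at $P_\star$, for time periods over which the disk region remains steady.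
   Context: Vectors are decomposed into meridional and azimuthal parts, $\mathbf v=\mathbf v_m+v_\phi\mathbf e_\phi$, $\mathbf B=\mathbf B_m+B_\phi\mathbf e_\phi$, where $\mathbf e_r,\mathbf e_\theta,\mathbf e_\phi$ are the unit coordinate vectors. All quantities are independent of $\phi$ (axial symmetry) and of time (steady state). In each region the material is a perfectly conducting fluid satisfying $\mathrm{div}(\rho\mathbf v)=0$, $\mathrm{div}\,\mathbf B=0$ and the steady induction equation $\mathrm{curl}(\mathbf v\times\mathbf B)=\mathbf 0$. In the flow region these imply $\mathbf v_m=\chi\mathbf B_m$ for a scalar function $\chi$ (meridional streamlines coincide with meridional field lines) and $\mathbf v=\chi\mathbf B+\omega\,r\sin\theta\,\mathbf e_\phi$, where $\omega$ is constant along each meridional field line; $\omega$ is the angular velocity of that field line, equal to the angular velocity of the star at the photospheric point $P_\star$ where the field line is anchored. Across the shock surface $\Sigma_{shock}$, with unit normal $\mathbf n$ pointing from the flow region into the disk and unit meridional tangent $\mathbf t=\mathbf n\times\mathbf e_\phi$, the jump conditions hold: the normal magnetic field is continuous, $\Delta[B_n]=0$, and the tangential electric field is continuous, $\Delta[(\mathbf v\times\mathbf B)\cdot\mathbf t]=0$, where $\Delta[\cdot]$ denotes the change across the shock and hatted quantities refer to the disk side. *)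

(* Defs.v *)
From Stdlib Require Import Reals.
From Coquelicot Require Import Coquelicot.
Open Scope R_scope.

(* A vector given by its components in the local orthonormal spherical frame
   (e_r, e_theta, e_phi), which is right-handed: e_r x e_theta = e_phi. *)
Record vec := mkv { vr : R; vth : R; vph : R }.

Definition ephi : vec := mkv 0 0 1.
Definition vadd (a b : vec) : vec := mkv (vr a + vr b) (vth a + vth b) (vph a + vph b).
Definition vscale (k : R) (a : vec) : vec := mkv (k * vr a) (k * vth a) (k * vph a).
Definition dot (a b : vec) : R := vr a * vr b + vth a * vth b + vph a * vph b.
Definition cross (a b : vec) : vec :=
  mkv (vth a * vph b - vph a * vth b)
      (vph a * vr b - vr a * vph b)
      (vr a * vth b - vth a * vr b).

Definition Rcyl (r th : R) : R := r * sin th.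

(* Axisymmetric (phi-independent) vector fields are functions of (r, theta).
   Curl and divergence in spherical polar coordinates, with all d/dphi = 0. *)
Definition curl_sph (E : R -> R -> vec) (r th : R) : vec :=
  mkv (Derive (fun t => sin t * vph (E r t)) th / (r * sin th))
      (- Derive (fun s => s * vph (E s th)) r / r)
      ((Derive (fun s => s * vth (E s th)) r - Derive (fun t => vr (E r t)) th) / r).

Definition div_sph (B : R -> R -> vec) (r th : R) : R :=
  Derive (fun s => s ^ 2 * vr (B s th)) r / r ^ 2
  + Derive (fun t => sin t * vth (B r t)) th / (r * sin th).

Definition open2 (D : R -> R -> Prop) : Prop :=
  forall r th, D r th -> exists delta, 0 < delta /\
    forall r' th', Rabs (r' - r) < delta -> Rabs (th' - th) < delta -> D r' th'.

Definition diff2 (f : R -> R -> R) (r th : R) : Prop :=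
  exists lx ly, differentiable_pt_lim f r th lx ly.

(* f(r0,th0) is the limit of f(r,th) as (r,th) -> (r0,th0) within D
   (used to say: disk-side values at the shock are the limits from the disk) *)
Definition cont_within_at (D : R -> R -> Prop) (f : R -> R -> R) (r0 th0 : R) : Prop :=
  forall eps, 0 < eps -> exists delta, 0 < delta /\
    forall r th, D r th -> Rabs (r - r0) < delta -> Rabs (th - th0) < delta ->
      Rabs (f r th - f r0 th0) < eps.

Definition cont_on (f : R -> R) (a b : R) : Prop :=
  forall s, a <= s <= b -> forall eps, 0 < eps -> exists delta, 0 < delta /\
    forall t, a <= t <= b -> Rabs (t - s) < delta -> Rabs (f t - f s) < eps.

(* g : [a,b] -> meridional plane, s |-> (r(s), theta(s)), is a meridional field
   line of B lying in Reg: continuous, and tangent to B_m, i.e.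
   dr/ds = B_r, r dtheta/ds = B_theta on (a,b). *)
Definition field_line (B : R -> R -> vec) (Reg : R -> R -> Prop)
  (g : R -> R * R) (a b : R) : Prop :=
  a <= b /\
  (forall s, a <= s <= b -> Reg (fst (g s)) (snd (g s))) /\
  cont_on (fun s => fst (g s)) a b /\ cont_on (fun s => snd (g s)) a b /\
  (forall s, a < s < b ->
     derivable_pt_lim (fun t => fst (g t)) s (vr (B (fst (g s)) (snd (g s)))) /\
     derivable_pt_lim (fun t => snd (g t)) s
        (vth (B (fst (g s)) (snd (g s))) / fst (g s))).

(* Regions are mirror
   symmetric; velocities are polar vectors (v_r, v_phi even, v_theta odd);
   the magnetic field is an axial vector, up to the global sign sigma allowed
   by the B -> -B symmetry of ideal MHD (sigma = 1: dipole-like parity). *)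
Definition eq_sym (sigma : R) (F D S Phot : R -> R -> Prop)
  (B v Bh vh : R -> R -> vec) (omega Omstar : R -> R -> R) : Prop :=
  (sigma = 1 \/ sigma = -1) /\
  (forall r th, (F r th <-> F r (PI - th)) /\ (D r th <-> D r (PI - th)) /\
                (S r th <-> S r (PI - th)) /\ (Phot r th <-> Phot r (PI - th))) /\
  (forall r th, forall X, (X = B \/ X = Bh) ->
     vr (X r (PI - th)) = - sigma * vr (X r th) /\
     vth (X r (PI - th)) = sigma * vth (X r th) /\
     vph (X r (PI - th)) = - sigma * vph (X r th)) /\
  (forall r th, forall X, (X = v \/ X = vh) ->
     vr (X r (PI - th)) = vr (X r th) /\
     vth (X r (PI - th)) = - vth (X r th) /\
     vph (X r (PI - th)) = vph (X r th)) /\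
  (forall r th, omega r (PI - th) = omega r th /\ Omstar r (PI - th) = Omstar r th).

(* Main.v *)
Require Import Defs.
From Stdlib Require Import Reals Lra.
From Coquelicot Require Import Coquelicot.
Open Scope R_scope.



Lemma Derive_of f x l : derivable_pt_lim f x l -> Derive f x = l.
Proof. intro H. apply is_derive_unique. apply is_derive_Reals. exact H. Qed.

Lemma dpl_eq f x l l' : derivable_pt_lim f x l -> l = l' -> derivable_pt_lim f x l'.
Proof. intros H E; rewrite <- E; exact H. Qed.

Lemma D_mult f g x lf lg : derivable_pt_lim f x lf -> derivable_pt_lim g x lg ->
  derivable_pt_lim (fun t => f t * g t) x (lf * g x + f x * lg).
Proof. intros H1 H2. exact (derivable_pt_lim_mult f g x lf lg H1 H2). Qed.

Lemma D_opp f x l : derivable_pt_lim f x l -> derivable_pt_lim (fun t => - f t) x (- l).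
Proof. intros H. exact (derivable_pt_lim_opp f x l H). Qed.

Lemma D_div f g x lf lg : derivable_pt_lim f x lf -> derivable_pt_lim g x lg -> g x <> 0 ->
  derivable_pt_lim (fun t => f t / g t) x ((lf * g x - lg * f x) / (g x)²).
Proof. intros H1 H2 H3. exact (derivable_pt_lim_div f g x lf lg H1 H2 H3). Qed.

Lemma D_sin f x l : derivable_pt_lim f x l -> derivable_pt_lim (fun t => sin (f t)) x (cos (f x) * l).
Proof. intros H. exact (derivable_pt_lim_comp f sin x l (cos (f x)) H (derivable_pt_lim_sin (f x))). Qed.

Lemma partial_r f r th lx ly : differentiable_pt_lim f r th lx ly ->
  derivable_pt_lim (fun s => f s th) r lx.
Proof. intro H.
  pose proof (derivable_pt_lim_comp_2d f (fun s => s) (fun _ => th) r lx ly 1 0 H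
     (derivable_pt_lim_id r) (derivable_pt_lim_const th r)) as H1.
  apply (dpl_eq _ _ _ _ H1); ring. Qed.

Lemma partial_t f r th lx ly : differentiable_pt_lim f r th lx ly ->
  derivable_pt_lim (fun t => f r t) th ly.
Proof. intro H.
  pose proof (derivable_pt_lim_comp_2d f (fun _ => r) (fun s => s) th lx ly 0 1 H
     (derivable_pt_lim_const r th) (derivable_pt_lim_id th)) as H1.
  apply (dpl_eq _ _ _ _ H1); ring. Qed.

Lemma key (w Br Bt : R -> R -> R) r th wr wt brr brt btr btt :
  0 < r -> 0 < sin th ->
  differentiable_pt_lim w r th wr wt ->
  differentiable_pt_lim Br r th brr brt ->
  differentiable_pt_lim Bt r th btr btt ->
  Derive (fun s => s * (w s th * Br s th)) r - Derive (fun t => - (w r t * Bt r t)) th = 0 ->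
  Derive (fun s => s ^ 2 * Br s th) r / r ^ 2 + Derive (fun t => sin t * Bt r t) th / (r * sin th) = 0 ->
  r * sin th * (wr * Br r th + wt * Bt r th / r) = w r th * (Br r th * sin th + cos th * Bt r th).
Proof.
  intros hr hs Hw HB HT E1 E2.
  assert (d1 : derivable_pt_lim (fun s => s * (w s th * Br s th)) r
     (1 * (w r th * Br r th) + r * (wr * Br r th + w r th * brr))).
  { apply (D_mult (fun s => s) (fun s => w s th * Br s th)). apply derivable_pt_lim_id.
    apply (D_mult (fun s => w s th) (fun s => Br s th)); eapply partial_r; eauto. }
  assert (d2 : derivable_pt_lim (fun t => - (w r t * Bt r t)) th
     (- (wt * Bt r th + w r th * btt))).
  { apply (D_opp (fun t => w r t * Bt r t)).
    apply (D_mult (fun t => w r t) (fun t => Bt r t)); eapply partial_t; eauto. }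
  assert (d3 : derivable_pt_lim (fun s => s ^ 2 * Br s th) r (2 * r * Br r th + r ^ 2 * brr)).
  { eapply dpl_eq.
    apply (D_mult (fun s => s ^ 2) (fun s => Br s th)). apply derivable_pt_lim_pow.
    eapply partial_r; eauto. simpl; ring. }
  assert (d4 : derivable_pt_lim (fun t => sin t * Bt r t) th (cos th * Bt r th + sin th * btt)).
  { apply (D_mult sin (fun t => Bt r t)). apply derivable_pt_lim_sin.
    eapply partial_t; eauto. }
  rewrite (Derive_of _ _ _ d1), (Derive_of _ _ _ d2) in E1.
  rewrite (Derive_of _ _ _ d3), (Derive_of _ _ _ d4) in E2.
  assert (E2' : 2 * sin th * Br r th + r * sin th * brr + cos th * Bt r th + sin th * btt = 0).
  { rewrite <- (Rmult_0_r (r * sin th)). rewrite <- E2. field. lra. }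
  apply Rminus_diag_uniq.
  match type of E1 with ?A = 0 => match type of E2' with ?C = 0 =>
    replace (r * sin th * (wr * Br r th + wt * Bt r th / r) -
             w r th * (Br r th * sin th + cos th * Bt r th))
      with (sin th * A - w r th * C) by (field; lra) end end.
  rewrite E1, E2'. ring.
Qed.

Lemma lim_lemma (X Y : R -> R) K x0 y0 s0 s1 p :
  (forall d, 0 < d -> exists c, s0 < c < s1 /\ Rabs (c - p) < d) ->
  (forall c, s0 < c < s1 -> X c = K * Y c) ->
  (forall eps, 0 < eps -> exists d, 0 < d /\ forall c, s0 < c < s1 -> Rabs (c - p) < d ->
      Rabs (X c - x0) < eps /\ Rabs (Y c - y0) < eps) ->
  x0 = K * y0.
Proof.
  intros Hex HXY Hlim.
  destruct (Req_dec x0 (K * y0)) as [E|Hne]; [exact E|exfalso].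
  assert (Hd : 0 < Rabs (x0 - K * y0)) by (apply Rabs_pos_lt; lra).
  set (d := Rabs (x0 - K * y0)) in *.
  assert (HK : 0 <= Rabs K) by apply Rabs_pos.
  set (eps := d / (2 * (Rabs K + 1))).
  assert (Heps : 0 < eps) by (unfold eps; apply Rdiv_lt_0_compat; lra).
  destruct (Hlim eps Heps) as [del [Hdel Hc]].
  destruct (Hex del Hdel) as [c [Hc1 Hc2]].
  destruct (Hc c Hc1 Hc2) as [B1 B2].
  assert (Eq : x0 - K * y0 = - (X c - x0) + K * (Y c - y0)) by (rewrite (HXY c Hc1); ring).
  assert (T : d <= Rabs (X c - x0) + Rabs K * Rabs (Y c - y0)).
  { unfold d. rewrite Eq. eapply Rle_trans. apply Rabs_triang.
    rewrite Rabs_Ropp, Rabs_mult. lra. }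
  assert (T2 : Rabs K * Rabs (Y c - y0) <= Rabs K * eps).
  { apply Rmult_le_compat_l; lra. }
  assert (T3 : eps + Rabs K * eps = d / 2) by (unfold eps; field; lra).
  lra.
Qed.

Theorem theorem1
  (* regions of the meridional half-plane (r, theta): flow region F, disk
     region D, shock surface S, stellar photosphere Phot *)
  (F D S Phot : R -> R -> Prop)
  (* flow-region fields (values at shock points = flow-side values) *)
  (B v : R -> R -> vec) (chi omega : R -> R -> R)
  (* disk-region fields (values at shock points = disk-side values) *)
  (Bh vh : R -> R -> vec)
  (* angular velocity of the star at photospheric points *)
  (Omstar : R -> R -> R)
  (H_half : forall r th, F r th \/ D r th \/ S r th \/ Phot r th ->
            0 < r /\ 0 < th < PI)
  (* flow region: v = chi B + omega r sin(theta) e_phi *)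
  (H_flow : forall r th, F r th \/ S r th \/ Phot r th ->
     v r th = vadd (vscale (chi r th) (B r th)) (vscale (omega r th * Rcyl r th) ephi))
  (* omega is constant along each meridional field line of the flow region *)
  (H_iso : forall g a b,
     field_line B (fun r th => F r th \/ S r th \/ Phot r th) g a b ->
     forall s, a <= s <= b -> omega (fst (g s)) (snd (g s)) = omega (fst (g a)) (snd (g a)))
  (* omega equals the stellar angular velocity at the anchoring point *)
  (H_anchor : forall r th, Phot r th -> omega r th = Omstar r th)
  (* disk region: open, no meridional motion, smooth, steady ideal MHD *)
  (HD_open : open2 D)
  (HD_nomer : forall r th, D r th \/ S r th -> vr (vh r th) = 0 /\ vth (vh r th) = 0)
  (HD_smooth : forall r th, D r th ->
     diff2 (fun a b => vr (vh a b)) r th /\ diff2 (fun a b => vth (vh a b)) r th /\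
     diff2 (fun a b => vph (vh a b)) r th /\ diff2 (fun a b => vr (Bh a b)) r th /\
     diff2 (fun a b => vth (Bh a b)) r th /\ diff2 (fun a b => vph (Bh a b)) r th)
  (HD_induction : forall r th, D r th ->
     curl_sph (fun a b => cross (vh a b) (Bh a b)) r th = mkv 0 0 0)
  (HD_divB : forall r th, D r th -> div_sph Bh r th = 0)
  (* disk-side values on the shock are limits from inside the disk *)
  (HD_bdry : forall r th, S r th ->
     cont_within_at D (fun a b => vr (vh a b)) r th /\
     cont_within_at D (fun a b => vth (vh a b)) r th /\
     cont_within_at D (fun a b => vph (vh a b)) r th /\
     cont_within_at D (fun a b => vr (Bh a b)) r th /\
     cont_within_at D (fun a b => vth (Bh a b)) r th /\
     cont_within_at D (fun a b => vph (Bh a b)) r th)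
  (* the point Q on the shock, and the shock surface near Q *)
  (rQ thQ : R) (HQ : S rQ thQ)
  (sigmaS : R -> R * R) (dr dth : R)
  (HsQ : sigmaS 0 = (rQ, thQ))
  (Hsr : derivable_pt_lim (fun u => fst (sigmaS u)) 0 dr)
  (Hsth : derivable_pt_lim (fun u => snd (sigmaS u)) 0 dth)
  (Hsnz : dr <> 0 \/ dth <> 0)
  (HsS : exists delta, 0 < delta /\
     forall u, Rabs u < delta -> S (fst (sigmaS u)) (snd (sigmaS u)))
  (* unit meridional normal n at Q, pointing from the flow region into the disk *)
  (nr nth : R) (Hn_unit : nr ^ 2 + nth ^ 2 = 1)
  (Hn_perp : nr * dr + nth * (rQ * dth) = 0)
  (Hn_into : exists e0, 0 < e0 /\
     forall e, 0 < e < e0 -> D (rQ + e * nr) (thQ + e * nth / rQ))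
  (* jump conditions at Q: Delta[B_n] = 0 and Delta[(v x B).t] = 0,
     with t = n x e_phi *)
  (H_jumpB : dot (B rQ thQ) (mkv nr nth 0) = dot (Bh rQ thQ) (mkv nr nth 0))
  (H_jumpE : dot (cross (v rQ thQ) (B rQ thQ)) (cross (mkv nr nth 0) ephi)
           = dot (cross (vh rQ thQ) (Bh rQ thQ)) (cross (mkv nr nth 0) ephi))
  (* the disk-side normal field at Q is nonzero *)
  (H_Bn : dot (Bh rQ thQ) (mkv nr nth 0) <> 0)
  (* the field line through Q is anchored at the photospheric point P_star *)
  (rP thP : R) (HP : Phot rP thP)
  (gF : R -> R * R) (a b : R)
  (HgF : field_line B (fun r th => F r th \/ S r th \/ Phot r th) gF a b)
  (HgFa : gF a = (rP, thP)) (HgFb : gF b = (rQ, thQ)) :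
  (* angular velocity of the disk at Q-hat equals that of the star at P_star *)
  vph (vh rQ thQ) / Rcyl rQ thQ = Omstar rP thP /\
  (* with equatorial symmetry and the field line continuing across the disk,
     the angular velocity is the same at all disk points along it *)
  (forall sigma, eq_sym sigma F D S Phot B v Bh vh omega Omstar ->
   forall (g : R -> R * R) (s0 s1 : R),
     field_line Bh (fun r th => D r th \/ S r th) g s0 s1 ->
     g s0 = (rQ, thQ) ->
     S (fst (g s1)) (snd (g s1)) ->
     (forall s, s0 < s < s1 -> D (fst (g s)) (snd (g s))) ->
     forall s, s0 <= s <= s1 ->
       vph (vh (fst (g s)) (snd (g s))) / Rcyl (fst (g s)) (snd (g s)) = Omstar rP thP).
Proof.
  assert (Hab : a <= b) by (destruct HgF as [h _]; exact h).
  assert (HomQ : omega rQ thQ = Omstar rP thP).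
  { pose proof (H_iso gF a b HgF b (conj Hab (Rle_refl b))) as E.
    rewrite HgFa, HgFb in E. simpl in E. rewrite E. apply H_anchor, HP. }
  assert (HQpos : 0 < rQ /\ 0 < thQ < PI) by (apply H_half; right; right; left; exact HQ).
  assert (HRQ : 0 < Rcyl rQ thQ).
  { unfold Rcyl; destruct HQpos as [h1 h2]; apply Rmult_lt_0_compat; [lra| apply sin_gt_0; lra]. }
  assert (Hpart1 : vph (vh rQ thQ) / Rcyl rQ thQ = Omstar rP thP).
  { rewrite <- HomQ.
    destruct (HD_nomer rQ thQ (or_intror HQ)) as [h1 h2].
    rewrite (H_flow rQ thQ (or_intror (or_introl HQ))) in H_jumpE.
    unfold dot, cross, vadd, vscale, ephi in H_jumpE, H_jumpB, H_Bn.
    cbn [vr vth vph] in H_jumpE, H_jumpB, H_Bn.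
    rewrite h1, h2 in H_jumpE.
    assert (E : vph (vh rQ thQ) * (vr (Bh rQ thQ) * nr + vth (Bh rQ thQ) * nth + vph (Bh rQ thQ) * 0)
              = omega rQ thQ * Rcyl rQ thQ * (vr (Bh rQ thQ) * nr + vth (Bh rQ thQ) * nth + vph (Bh rQ thQ) * 0)).
    { match type of H_jumpE with ?L = ?Rr => transitivity (- Rr); [ring | rewrite <- H_jumpE] end.
      match type of H_jumpB with ?L = ?Rr => transitivity (omega rQ thQ * Rcyl rQ thQ * L); [ring | rewrite H_jumpB; ring] end. }
    apply Rmult_eq_reg_r in E; [|exact H_Bn].
    rewrite E. field. lra. }
  split; [exact Hpart1|].
  intros sigma _ g s0 s1 Hfl Hg0 HS1 HDint s Hs.
  destruct Hfl as [Hle [Hreg [Hc1 [Hc2 Hder]]]].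
  set (X := fun c => vph (vh (fst (g c)) (snd (g c)))).
  set (Y := fun c => Rcyl (fst (g c)) (snd (g c))).
  change (X s / Y s = Omstar rP thP).
  assert (Hpos : forall c, s0 <= c <= s1 -> 0 < fst (g c) /\ 0 < sin (snd (g c))).
  { intros c Hc. destruct (H_half (fst (g c)) (snd (g c))) as [h1 h2].
    { destruct (Hreg c Hc) as [h|h]; [right; left; exact h| right; right; left; exact h]. }
    split; [exact h1| apply sin_gt_0; lra]. }
  assert (HY : forall c, s0 <= c <= s1 -> 0 < Y c).
  { intros c Hc. destruct (Hpos c Hc). unfold Y, Rcyl. apply Rmult_lt_0_compat; lra. }
  assert (Hderiv : forall c, s0 < c < s1 -> derivable_pt_lim (fun t => X t / Y t) c 0).
  { intros c Hc.
    assert (HDc : D (fst (g c)) (snd (g c))) by (apply HDint; exact Hc).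
    destruct (Hpos c (conj (Rlt_le _ _ (proj1 Hc)) (Rlt_le _ _ (proj2 Hc)))) as [hr hs].
    destruct (HD_smooth _ _ HDc) as [_ [_ [[wr [wt Hw]] [[brr [brt HB]] [[btr [btt HT]] _]]]]].
    destruct (Hder c Hc) as [Hg1 Hg2].
    destruct (HD_open _ _ HDc) as [del [Hdel Hopen]].
    pose proof (f_equal vph (HD_induction _ _ HDc)) as Ecurl.
    unfold curl_sph in Ecurl; cbn [vph] in Ecurl.
    rewrite (Derive_ext_loc (fun s => s * vth (cross (vh s (snd (g c))) (Bh s (snd (g c))))) (fun s => s * ((fun a b => vph (vh a b)) s (snd (g c)) *
               (fun a b => vr (Bh a b)) s (snd (g c))))) in Ecurl.
    2:{ exists (mkposreal del Hdel). intros y Hy.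
        assert (Dy : D y (snd (g c))).
        { apply Hopen. exact Hy. rewrite Rminus_diag, Rabs_R0. exact Hdel. }
        destruct (HD_nomer _ _ (or_introl Dy)) as [e1 e2].
        unfold cross; cbn [vr vth vph]. rewrite e1. ring. }
    rewrite (Derive_ext_loc (fun t => vr (cross (vh (fst (g c)) t) (Bh (fst (g c)) t))) (fun t => - ((fun a b => vph (vh a b)) (fst (g c)) t *
               (fun a b => vth (Bh a b)) (fst (g c)) t))) in Ecurl.
    2:{ exists (mkposreal del Hdel). intros y Hy.
        assert (Dy : D (fst (g c)) y).
        { apply Hopen; [rewrite Rminus_diag, Rabs_R0; exact Hdel | exact Hy]. }
        destruct (HD_nomer _ _ (or_introl Dy)) as [e1 e2].
        unfold cross; cbn [vr vth vph]. rewrite e2. ring. }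
    match type of Ecurl with (?A - ?B) / _ = 0 =>
      assert (E1 : A - B = 0) by
        (rewrite <- (Rmult_0_l (fst (g c))), <- Ecurl; field; lra) end.
    pose proof (HD_divB _ _ HDc) as E2. unfold div_sph in E2.
    pose proof (key (fun a b => vph (vh a b)) (fun a b => vr (Bh a b)) (fun a b => vth (Bh a b))
                 _ _ _ _ _ _ _ _ hr hs Hw HB HT E1 E2) as Hkey.
    cbv beta in Hkey.
    pose proof (derivable_pt_lim_comp_2d (fun a b => vph (vh a b)) (fun t => fst (g t))
                 (fun t => snd (g t)) c _ _ _ _ Hw Hg1 Hg2) as dX.
    assert (dY : derivable_pt_lim (fun t => fst (g t) * sin (snd (g t))) c
        (vr (Bh (fst (g c)) (snd (g c))) * sin (snd (g c)) +
         fst (g c) * (cos (snd (g c)) * (vth (Bh (fst (g c)) (snd (g c))) / fst (g c))))).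
    { apply (D_mult (fun t => fst (g t)) (fun t => sin (snd (g t)))). exact Hg1.
      apply (D_sin (fun t => snd (g t))). exact Hg2. }
    pose proof (D_div _ _ _ _ _ dX dY) as dQ.
    eapply dpl_eq. apply dQ. cbv beta; apply Rgt_not_eq, Rmult_lt_0_compat; lra.
    cbv beta.
    match goal with |- (?N) / _ = 0 => assert (HN : N = 0) end.
    { transitivity (fst (g c) * sin (snd (g c)) * (wr * vr (Bh (fst (g c)) (snd (g c))) +
           wt * vth (Bh (fst (g c)) (snd (g c))) / fst (g c)) -
           vph (vh (fst (g c)) (snd (g c))) * (vr (Bh (fst (g c)) (snd (g c))) * sin (snd (g c)) +
             cos (snd (g c)) * vth (Bh (fst (g c)) (snd (g c))))).
      field; lra.
      unfold Rdiv in Hkey |- *. rewrite Hkey. ring. }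
    rewrite HN. unfold Rdiv. ring. }
  assert (Hconst : forall c d, s0 < c < s1 -> s0 < d < s1 -> c <= d -> X c / Y c = X d / Y d).
  { intros c d Hc Hd Hcd.
    destruct (Rle_lt_or_eq_dec _ _ Hcd) as [Hcd'|E]; [|rewrite E; reflexivity].
    assert (Hm := MVT_gen (fun t => X t / Y t) c d (fun _ => 0)).
    cbv zeta in Hm. rewrite Rmin_left, Rmax_right in Hm by lra.
    destruct Hm as [z [_ Hz]].
    - intros x Hx. apply is_derive_Reals, Hderiv; lra.
    - intros x Hx. apply derivable_continuous_pt. exists 0. apply Hderiv; lra.
    - cbv beta in Hz. lra. }
  assert (Hlim : forall p, S (fst (g p)) (snd (g p)) -> s0 <= p <= s1 ->
     forall eps, 0 < eps -> exists d, 0 < d /\ forall c, s0 < c < s1 -> Rabs (c - p) < d ->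
       Rabs (X c - X p) < eps /\ Rabs (Y c - Y p) < eps).
  { intros p HSp Hp eps Heps.
    destruct (HD_bdry _ _ HSp) as [_ [_ [Hw _]]].
    destruct (Hw eps Heps) as [d1 [Hd1 Hw1]].
    assert (Hcy : continuity_2d_pt (fun u v => u * sin v) (fst (g p)) (snd (g p))).
    { apply continuity_2d_pt_mult. apply continuity_2d_pt_id1.
      apply (continuity_1d_2d_pt_comp sin (fun _ v => v)). apply continuity_sin.
      apply continuity_2d_pt_id2. }
    destruct (Hcy (mkposreal eps Heps)) as [d2 Hd2].
    assert (He : 0 < Rmin d1 d2) by (apply Rmin_glb_lt; [lra | apply cond_pos]).
    destruct (Hc1 p Hp _ He) as [e1 [He1 H1]].
    destruct (Hc2 p Hp _ He) as [e2 [He2 H2]].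
    exists (Rmin e1 e2). split. apply Rmin_glb_lt; lra.
    intros c Hc Hcp.
    assert (Hcp1 : Rabs (c - p) < e1) by (eapply Rlt_le_trans; [exact Hcp| apply Rmin_l]).
    assert (Hcp2 : Rabs (c - p) < e2) by (eapply Rlt_le_trans; [exact Hcp| apply Rmin_r]).
    assert (Hc' : s0 <= c <= s1) by lra.
    pose proof (H1 c Hc' Hcp1) as G1. pose proof (H2 c Hc' Hcp2) as G2.
    assert (m1 := Rmin_l d1 d2). assert (m2 := Rmin_r d1 d2).
    split.
    - apply Hw1. apply HDint; exact Hc. lra. lra.
    - unfold Y, Rcyl. apply Hd2; lra. }
  assert (HX0 : X s0 / Y s0 = Omstar rP thP).
  { unfold X, Y. rewrite Hg0. exact Hpart1. }
  assert (HS0 : S (fst (g s0)) (snd (g s0))) by (rewrite Hg0; exact HQ).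
  destruct Hs as [Hsa Hsb].
  destruct (Rle_lt_or_eq_dec _ _ Hsa) as [Hlt|Heq].
  2:{ subst s. exact HX0. }
  assert (Hlt1 : s0 < s1) by lra.
  assert (Hex0 : forall d, 0 < d -> exists c, s0 < c < s1 /\ Rabs (c - s0) < d).
  { intros d Hd. exists (s0 + Rmin d (s1 - s0) / 2).
    assert (0 < Rmin d (s1 - s0)) by (apply Rmin_glb_lt; lra).
    assert (m1 := Rmin_l d (s1 - s0)). assert (m2 := Rmin_r d (s1 - s0)).
    split. lra. rewrite Rabs_right; lra. }
  assert (Hex1 : forall d, 0 < d -> exists c, s0 < c < s1 /\ Rabs (c - s1) < d).
  { intros d Hd. exists (s1 - Rmin d (s1 - s0) / 2).
    assert (0 < Rmin d (s1 - s0)) by (apply Rmin_glb_lt; lra).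
    assert (m1 := Rmin_l d (s1 - s0)). assert (m2 := Rmin_r d (s1 - s0)).
    split. lra. rewrite Rabs_left; lra. }
  assert (Hint : forall c, s0 < c < s1 -> X c / Y c = Omstar rP thP).
  { intros c Hc. set (K := X c / Y c).
    assert (HXY : forall c', s0 < c' < s1 -> X c' = K * Y c').
    { intros c' Hc'.
      assert (E : X c' / Y c' = K).
      { unfold K. destruct (Rle_dec c c').
        - symmetry; apply Hconst; lra.
        - apply Hconst; lra. }
      rewrite <- E. field. apply Rgt_not_eq, HY; lra. }
    pose proof (lim_lemma X Y K (X s0) (Y s0) s0 s1 s0 Hex0 HXY
                  (Hlim s0 HS0 (conj (Rle_refl _) Hle))) as E.
    rewrite <- HX0, E. field. apply Rgt_not_eq, HY; lra. }
  destruct (Rle_lt_or_eq_dec _ _ Hsb) as [Hlt2|Heq2].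
  { apply Hint; lra. }
  subst s.
  assert (HXY : forall c', s0 < c' < s1 -> X c' = Omstar rP thP * Y c').
  { intros c' Hc'. rewrite <- (Hint c' Hc'). field. apply Rgt_not_eq, HY; lra. }
  pose proof (lim_lemma X Y _ (X s1) (Y s1) s0 s1 s1 Hex1 HXY
                (Hlim s1 HS1 (conj Hle (Rle_refl _)))) as E.
  rewrite E. field. apply Rgt_not_eq, HY; lra.

Qed.
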